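(* Let $n,r\ge 1$ be integers, let $u$ be a vertex of $G(n,r)$, let $0\le k\le r$, and let $(i_1,j_1),\dots,(i_k,j_k)$ be positions in an $n\times n$ matrix (not necessarily distinct) such that $u\ge E_n(i_1,j_1)+\dots+E_n(i_k,j_k)$ entrywise. Then there exist vertices $u_1,\dots,u_r$ of $G(n,1)$ (i.e. $n\times n$ permutation matrices) with $u=u_1+\dots+u_r$ and such that $u_1+\dots+u_l\ge E_n(i_1,j_1)+\dots+E_n(i_l,j_l)$ entrywise for every $1\le l\le k$.
   Context: For integers $n,r\ge 1$, $G(n,r)$ is the graph whose vertices are the $n\times n$ matrices with non-negative integer entries all of whose row sums and column sums equal $r$ (adjacency is irrelevant here). $E_n(i,j)$ denotes the $n\times n$ matrix with all entries $0$ except the entry in position $(i,j)$, which is $1$. Matrix inequalities are entrywise. *)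

(* Defs.v *)
From mathcomp Require Import all_boot all_order all_algebra.
Set Implicit Arguments. Unset Strict Implicit. Unset Printing Implicit Defensive.

Definition is_vertex (n r : nat) (u : 'M[nat]_n) : Prop :=
  (forall i : 'I_n, (\sum_(j < n) u i j)%N = r) /\
  (forall j : 'I_n, (\sum_(i < n) u i j)%N = r).

Definition Emat (n : nat) (i j : 'I_n) : 'M[nat]_n :=
  \matrix_(a < n, b < n) (((a == i) && (b == j)) : nat).

Definition mx_le (n : nat) (A B : 'M[nat]_n) : Prop :=
  forall a b : 'I_n, (A a b <= B a b)%N.

(* Main.v *)
Require Import Defs.
From mathcomp Require Import all_boot all_order all_algebra all_fingroup zify.
Set Implicit Arguments. Unset Strict Implicit. Unset Printing Implicit Defensive.

Definition nbr (T1 T2 : finType) (R : T1 -> T2 -> bool) (S : {set T1}) : {set T2} :=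
  [set y | [exists x in S, R x y]].

Lemma hall (T1 T2 : finType) (y0 : T2) n : forall (R : T1 -> T2 -> bool) (A : {set T1}),
  #|A| <= n -> (forall S : {set T1}, S \subset A -> #|S| <= #|nbr R S|) ->
  exists f : T1 -> T2, {in A &, injective f} /\ {in A, forall x, R x (f x)}.
Proof.
elim: n => [|n IH] R A hA hH.
  exists (fun _ => y0).
  have A0: A = set0 by apply/eqP; rewrite -cards_eq0; lia.
  by rewrite A0; split => x; rewrite in_set0.
case: (set_0Vmem A) => [A0|[a aA]].
  by exists (fun _ => y0); rewrite A0; split => x; rewrite in_set0.
case: (boolP [exists S : {set T1}, [&& S \subset A, S != set0, S != A & #|nbr R S| <= #|S|]]).
  case/existsP => S /and4P [sSA S0 SA hS].
  have ltS : #|S| < #|A| by apply: proper_card; rewrite properEneq SA sSA.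
  have [f1 [inj1 R1]] := IH R S (ltac:(lia)) (fun S' sS' => hH S' (subset_trans sS' sSA)).
  set NS := nbr R S.
  pose R2 := fun x y => R x y && (y \notin NS).
  have S0' : 0 < #|S| by rewrite card_gt0.
  have lt2: #|A :\: S| <= n.
    rewrite cardsD (setIidPr sSA); lia.
  have hH2 : forall S' : {set T1}, S' \subset A :\: S -> #|S'| <= #|nbr R2 S'|.
    move=> S' sS'.
    have dis : S' :&: S = set0.
      apply/setP => x; rewrite !inE; apply/negbTE; apply/negP => /andP [xS' xS].
      by move: (subsetP sS' x xS'); rewrite !inE xS.
    have := hH (S' :|: S) (ltac:(rewrite subUset sSA andbT; apply: subset_trans sS' _; apply: subsetDl)).
    rewrite cardsU dis cards0 subn0.
    have sub : nbr R (S' :|: S) \subset nbr R2 S' :|: NS.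
      apply/subsetP => y; rewrite !inE => /existsP [x /andP [xin Rxy]].
      case: (boolP (y \in NS)) => yN; first by move: yN; rewrite inE => ->; rewrite orbT.
      apply/orP; left; apply/existsP; exists x.
      rewrite /R2 Rxy yN andbT.
      move: xin; rewrite inE andbT => /orP [//|xS].
      by move: yN; rewrite inE negb_exists => /forallP /(_ x); rewrite xS Rxy.
    have := subset_leq_card sub; rewrite cardsU. move: hS; rewrite -/NS. lia.
  have [f2 [inj2 R2f]] := IH R2 (A :\: S) lt2 hH2.
  exists (fun x => if x \in S then f1 x else f2 x); split.
    move=> x1 x2 x1A x2A /=.
    have N1 : forall x, x \in S -> f1 x \in NS.
      by move=> x xS; rewrite inE; apply/existsP; exists x; rewrite xS R1.
    have N2 : forall x, x \in A -> x \notin S -> f2 x \notin NS.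
      by move=> x xA xS; have := R2f x; rewrite inE xS xA => /(_ isT) /andP [].
    case: (boolP (x1 \in S)) => h1; case: (boolP (x2 \in S)) => h2.
    - exact: inj1.
    - by move=> e; move: (N2 _ x2A h2); rewrite -e N1.
    - by move=> e; move: (N2 _ x1A h1); rewrite e N1.
    - by apply: inj2; rewrite inE ?h1 ?h2 ?x1A ?x2A.
  move=> x xA /=; case: ifP => xS; first exact: R1.
  by have := R2f x; rewrite inE xS xA => /(_ isT) /andP [].
rewrite negb_exists => /forallP H.
have : 0 < #|nbr R [set a]| by have := hH [set a]; rewrite sub1set aA cards1; apply.
rewrite card_gt0 => /set0Pn [b]; rewrite inE => /existsP [a' /andP]; rewrite inE => -[/eqP -> Rab].
pose R' := fun x y => R x y && (y != b).
have hA' : #|A :\ a| <= n by move: hA; rewrite (cardsD1 a A) aA; lia.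
have hH' : forall S' : {set T1}, S' \subset A :\ a -> #|S'| <= #|nbr R' S'|.
  move=> S' sS'.
  case: (set_0Vmem S') => [->|[x xS]]; first by rewrite cards0.
  have aS : a \notin S' by apply/negP => /(subsetP sS'); rewrite !inE eqxx.
  have sS'A : S' \subset A by apply: subset_trans sS' (subD1set _ _).
  have := H S'; rewrite sS'A /=.
  have -> : (S' != set0) by apply/set0Pn; exists x.
  have -> /= : S' != A by apply/eqP => e; move: aS; rewrite e aA.
  rewrite -ltnNge => lt.
  have sub : nbr R S' \subset b |: nbr R' S'.
    apply/subsetP => y; rewrite !inE => /existsP [z /andP [zS Rzy]].
    case: (eqVneq y b) => [//|yb] /=.
    by apply/existsP; exists z; rewrite zS /R' Rzy yb.
  have := subset_leq_card sub; rewrite cardsU1. lia.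
have [f' [inj' Rf']] := IH R' (A :\ a) hA' hH'.
have Nb : forall x, x \in A :\ a -> f' x != b by move=> x xA; case/andP: (Rf' x xA).
exists (fun x => if x == a then b else f' x); split.
  move=> x1 x2 x1A x2A /=.
  case: (eqVneq x1 a) => h1; case: (eqVneq x2 a) => h2.
  - by rewrite h1 h2.
  - by move=> e; move: (Nb x2 (ltac:(by rewrite !inE h2))); rewrite -e eqxx.
  - by move=> e; move: (Nb x1 (ltac:(by rewrite !inE h1))); rewrite e eqxx.
  - by apply: inj'; rewrite !inE ?h1 ?h2.
move=> x xA /=; case: (eqVneq x a) => [->//|xa].
by case/andP: (Rf' x (ltac:(by rewrite !inE xa))).
Qed.

Lemma sum_eq1 n (x : 'I_n) : \sum_(j < n) ((j == x) : nat) = 1.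
Proof. by rewrite (bigD1 x) //= eqxx big1 // => j /negbTE ->. Qed.

Lemma entry_le_row n (F : 'I_n -> nat) j : F j <= \sum_(i < n) F i.
Proof. by rewrite (bigD1 j) //= leq_addr. Qed.

Definition pm n (s : {perm 'I_n}) : 'M[nat]_n := \matrix_(i, j) ((s i == j) : nat).

Lemma pm_vertex n (s : {perm 'I_n}) : is_vertex 1 (pm s).
Proof.
split=> [i|j].
  under eq_bigr do rewrite mxE eq_sym. exact: sum_eq1.
under eq_bigr do rewrite mxE -(inj_eq (@perm_inj _ s^-1)) permK.
exact: sum_eq1.
Qed.

Lemma perm_in n r (u : 'M[nat]_n) : 0 < n -> 0 < r -> is_vertex r u ->
  exists s : {perm 'I_n}, forall i, 0 < u i (s i).
Proof.
move=> hn hr [hrow hcol].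
have y0 : 'I_n by exact: Ordinal hn.
have hH : forall S : {set 'I_n}, S \subset [set: 'I_n] -> #|S| <= #|nbr (fun i j => 0 < u i j) S|.
  move=> S _.
  set NS := nbr _ S.
  have e1 : \sum_(i in S) \sum_(j < n) u i j = #|S| * r.
    by rewrite -sum_nat_const; apply: eq_bigr => i _; rewrite hrow.
  have e2 : \sum_(j in NS) \sum_(i < n) u i j = #|NS| * r.
    by rewrite -sum_nat_const; apply: eq_bigr => i _; rewrite hcol.
  have le : #|S| * r <= #|NS| * r.
    rewrite -e1 -e2.
    apply: (@leq_trans (\sum_(i < n) \sum_(j in NS) u i j)); last by rewrite exchange_big.
    rewrite [X in _ <= X](bigID (fun i => i \in S)) /= -[X in X <= _]addn0 leq_add //.
    apply: leq_sum => i iS.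
    rewrite (bigID (fun j => j \in NS)) /= [X in _ + X]big1 ?addn0 // => j jN.
    apply/eqP; rewrite -leqn0 leqNgt; apply/negP => h.
    by move: jN; rewrite inE; case/negP; apply/existsP; exists i; rewrite iS.
  by rewrite leq_pmul2r in le.
have [f [finj fR]] := @hall _ _ y0 #|[set: 'I_n]| (fun i j => 0 < u i j) [set: 'I_n] (leqnn _) hH.
have inj : injective f by move=> x y; apply: finj; rewrite inE.
by exists (perm inj) => i; rewrite permE; apply: fR; rewrite inE.
Qed.

Lemma birk n (hn : 0 < n) r : forall u : 'M[nat]_n, is_vertex r u ->
  exists us : nat -> 'M[nat]_n, (forall t, t < r -> is_vertex 1 (us t)) /\
    forall a b, u a b = \sum_(0 <= t < r) us t a b.
Proof.
elim: r => [|r IH] u hu.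
  exists (fun _ => 0%R); split => // a b.
  rewrite big_geq //; apply/eqP; rewrite -leqn0.
  by case: hu => h _; rewrite -(h a); apply: entry_le_row.
have [s hs] := perm_in hn (ltn0Sn r) hu.
pose P := pm s.
have Pu : forall a b, P a b <= u a b.
  by move=> a b; rewrite mxE; case: eqP => // <-.
pose u' : 'M[nat]_n := (\matrix_(i, j) (u i j - P i j)%N)%R.
have hu' : is_vertex r u'.
  case: hu => h1 h2; case: (pm_vertex s) => p1 p2; split.
    move=> i; have := h1 i; have := p1 i.
    have : \sum_(j < n) u i j = \sum_(j < n) P i j + \sum_(j < n) u' i j.
      by rewrite -big_split; apply: eq_bigr => j _; rewrite !mxE; have := Pu i j; rewrite mxE => h; exact/esym/subnKC.
    move=> ->; rewrite /P => ->; lia.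
  move=> j; have := h2 j; have := p2 j.
  have : \sum_(i < n) u i j = \sum_(i < n) P i j + \sum_(i < n) u' i j.
    by rewrite -big_split; apply: eq_bigr => i _; rewrite !mxE; have := Pu i j; rewrite mxE => h; exact/esym/subnKC.
  move=> ->; rewrite /P => ->; lia.
have [us [v1 e1]] := IH u' hu'.
exists (fun t => if t is t'.+1 then us t' else P); split.
  by case=> [|t] /= ht; [exact: pm_vertex | exact: v1].
move=> a b; rewrite big_nat_recl //= -e1 /u' !mxE; have := Pu a b; rewrite mxE => h; exact/esym/subnKC.
Qed.

Lemma entry_perm n (hn : 0 < n) r (u : 'M[nat]_n) a b : 0 < r -> is_vertex r u ->
  exists P : 'M[nat]_n, is_vertex 1 P /\ (forall i j, P i j <= u i j) /\
    (0 < u a b -> 0 < P a b).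
Proof.
move=> hr hu; have [us [v e]] := birk hn hu.
have le : forall t, t < r -> forall i j, us t i j <= u i j.
  move=> t tr i j; rewrite e (@big_cat_nat _ _ _ t 0 r) //= ?(ltnW tr) //.
  by apply: leq_trans (leq_addl _ _); rewrite big_ltn //= leq_addr.
case: (boolP [exists t : 'I_r, 0 < us t a b]) => [/existsP [t ht]|/existsPn H].
  by exists (us t); split; [exact: v | split => //; exact: le].
exists (us 0); split; first exact: v.
split; first exact: le.
by rewrite e big_mkord big1 // => t _; move: (H t); rewrite lt0n negbK => /eqP.
Qed.

Lemma gen n (hn : 0 < n) r : forall (u : 'M[nat]_n) k (C : nat -> 'M[nat]_n) (pos : nat -> 'I_n * 'I_n),
  is_vertex r u -> k <= r -> (forall a b, C 0 a b = 0) ->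
  (forall l, l <= k -> forall a b, C l a b <= u a b) ->
  (forall l a b, l < k -> C l.+1 a b <= C l a b + Emat (pos l).1 (pos l).2 a b) ->
  exists us : nat -> 'M[nat]_n, (forall t, t < r -> is_vertex 1 (us t)) /\
    (forall a b, u a b = \sum_(0 <= t < r) us t a b) /\
    (forall l, l <= k -> forall a b, C l a b <= \sum_(0 <= t < l) us t a b).
Proof.
elim: r => [|r IH] u k C pos hu hk C0 Cu Cs.
  have [us [v e]] := birk hn hu.
  exists us; split; first exact: v; split; first exact: e.
  move=> l hl a b; have -> : l = 0 by lia.
  by rewrite C0.
case: k hk Cu Cs => [|k] hk Cu Cs.
  have [us [v e]] := birk hn hu.
  exists us; split; first exact: v; split; first exact: e.
  move=> l hl a b; have -> : l = 0 by lia.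
  by rewrite C0.
have [P [vP [Pu Pab]]] := entry_perm hn (pos 0).1 (pos 0).2 (ltn0Sn r) hu.
have C1P : forall a b, C 1 a b <= P a b.
  move=> a b; have h := Cs 0 a b (ltn0Sn k); rewrite C0 add0n mxE in h.
  case hab : ((a == (pos 0).1) && (b == (pos 0).2)) in h; last by move: h => /=; lia.
  case/andP: hab => /eqP ea /eqP eb; rewrite -ea -eb in Pab.
  have hu1 := Cu 1 (ltn0Sn k) a b.
  case: (posnP (C 1 a b)) => [->//|h0].
  have := Pab (leq_trans h0 hu1); lia.
pose u' : 'M[nat]_n := (\matrix_(i, j) (u i j - P i j)%N)%R.
have hu' : is_vertex r u'.
  case: hu => h1 h2; case: vP => p1 p2; split.
    move=> i; have := h1 i; have := p1 i.
    have : \sum_(j < n) u i j = \sum_(j < n) P i j + \sum_(j < n) u' i j.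
      by rewrite -big_split; apply: eq_bigr => j _; rewrite !mxE; exact/esym/subnKC/Pu.
    move=> -> ->; lia.
  move=> j; have := h2 j; have := p2 j.
  have : \sum_(i < n) u i j = \sum_(i < n) P i j + \sum_(i < n) u' i j.
    by rewrite -big_split; apply: eq_bigr => i _; rewrite !mxE; exact/esym/subnKC/Pu.
  move=> -> ->; lia.
pose C' := fun m => (\matrix_(i, j) (C m.+1 i j - P i j)%N)%R : 'M[nat]_n.
have [us [v [e c]]] := IH u' k C' (fun t => pos t.+1) hu' hk
  (ltac:(move=> a b; rewrite mxE; have := C1P a b; lia))
  (ltac:(move=> l hl a b; rewrite !mxE; have := Cu l.+1 hl a b; lia))
  (ltac:(move=> l a b hl; rewrite !mxE; have := Cs l.+1 a b hl; rewrite !mxE; lia)).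
exists (fun t => if t is t'.+1 then us t' else P); split.
  by case=> [|t] /= ht; [exact: vP | exact: v].
split.
  move=> a b; rewrite big_nat_recl //= -e /u' !mxE; exact/esym/subnKC/Pu.
case=> [|l] hl a b; first by rewrite C0.
rewrite big_nat_recl //=.
have := c l hl a b; rewrite mxE; lia.
Qed.

Theorem lemma2p6 (n r : nat) (hn : (1 <= n)%N) (hr : (1 <= r)%N)
  (u : 'M[nat]_n) (hu : is_vertex r u) (k : nat) (hk : (k <= r)%N)
  (pos : nat -> 'I_n * 'I_n)
  (hpos : mx_le (\sum_(0 <= t < k) Emat (pos t).1 (pos t).2)%R u) :
  exists us : nat -> 'M[nat]_n,
    (forall t, (t < r)%N -> is_vertex 1 (us t)) /\
    u = (\sum_(0 <= t < r) us t)%R /\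
    (forall l, (1 <= l <= k)%N ->
       mx_le (\sum_(0 <= t < l) Emat (pos t).1 (pos t).2)%R
             (\sum_(0 <= t < l) us t)%R).
Proof.
pose C := fun l => (\sum_(0 <= t < l) Emat (pos t).1 (pos t).2)%R : 'M[nat]_n.
have CE : forall l a b, C l a b = \sum_(0 <= t < l) Emat (pos t).1 (pos t).2 a b.
  by move=> l a b; rewrite /C summxE.
have C0 : forall a b, C 0 a b = 0 by move=> a b; rewrite CE big_geq.
have Cu : forall l, l <= k -> forall a b, C l a b <= u a b.
  move=> l hl a b; apply: leq_trans (hpos a b).
  by rewrite summxE CE (@big_cat_nat _ _ _ l 0 k) //= leq_addr.
have Cs : forall l a b, l < k -> C l.+1 a b <= C l a b + Emat (pos l).1 (pos l).2 a b.
  by move=> l a b _; rewrite !CE big_nat_recr.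
have [us [v [e c]]] := @gen n hn r u k C pos hu hk C0 Cu Cs.
exists us; split => //; split.
  by apply/matrixP => a b; rewrite e summxE.
by move=> l /andP [_ hl] a b; rewrite !summxE -CE; exact: c l hl a b.
Qed.
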